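(* Assume the standing assumptions (A1)–(A4), $\rho>0$, and $D_0>0$, $L_0>0$. Let $\epsilon_1,\epsilon_2\ge 0$ satisfy $\bigl[\frac{2\epsilon_1}{\mu_0}\bigr]^{1/2}\le Z_1(\epsilon_2)$. If $p\in\mathbb R^{n_p}$ satisfies $|f(p)-f(p^* )|\le \epsilon_1$, then $|f_0(p)-f_0(p^* )|\le \epsilon_2$.
   Context: Let $n_p,n_c\ge 1$, let $f_0:\mathbb R^{n_p}\to\mathbb R$ and $c_i:\mathbb R^{n_p}\to\mathbb R$ ($i=1,\dots,n_c$) be continuously differentiable, and let $\{1,\dots,n_c\}=I_s\cup I_h$ be a partition into disjoint sets of soft and hard constraint indices. The original problem is $\min_{p\in\mathbb R^{n_p}} f_0(p)$ subject to $c_i(p)\le 0$ for all $i$; $f^{opt}$ denotes its optimal value and $p^{opt}$ an optimal solution (assumed to exist). For a fixed $\varepsilon_\psi>0$ let $\psi(p):=\sum_{i\in I_s}[\max\{0,c_i(p)\}]^2+\sum_{i\in I_h}[\max\{0,c_i(p)+\varepsilon_\psi\}]^2$, and for a penalty parameter $\rho>0$ let $f(p):=f_0(p)+\rho\,\psi(p)$. A differentiable function $\ell$ belongs to $\mathcal F^1_L$ if $\ell(p_2)\le \ell(p_1)+\langle \ell'(p_1),p_2-p_1\rangle+\frac L2\|p_2-p_1\|^2$ for all $p_1,p_2$, and is $\mu$-strongly convex if $\ell(p_2)\ge \ell(p_1)+\langle \ell'(p_1),p_2-p_1\rangle+\frac \mu2\|p_2-p_1\|^2$ for all $p_1,p_2$.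 Standing assumptions: (A1) $f_0(p)\ge 0$ for all $p$; (A2) $f_0\in\mathcal F^1_{L_0}$ and $\psi\in\mathcal F^1_{L_\psi}$ for some reals $L_0,L_\psi\ge 0$; (A3) $f_0$ is $\mu_0$-strongly convex for some $\mu_0>0$, and $\psi$ is convex; (A4) the set $\mathcal A:=\{p:\psi(p)=0\}$ is nonempty and there is $\beta>0$ with $\psi(p)\ge \beta\,[d(p,\mathcal A)]^2$ for all $p$, where $d(p,\mathcal A):=\min_{z\in\mathcal A}\|z-p\|$. Notation: $\|\cdot\|$ is the Euclidean norm; $p^*$ is the unique minimizer of $f$ over $\mathbb R^{n_p}$; $p_u$ is the unique unconstrained minimizer of $f_0$; $p_a$ is a fixed point with $\psi(p_a)=0$; $D_0:=\sup\{\|f_0'(p)\|:\ f_0(p)\le f_0(p_a)\}$; $d(p):=\|p-p^*\|$. For $\epsilon\ge 0$, $Z_1(\epsilon):=\frac{D_0}{L_0}\Bigl[\bigl(1+\frac{2L_0}{D_0^2}\epsilon\bigr)^{1/2}-1\Bigr]$. *)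

(* Defs.v *)
From mathcomp Require Import all_boot.
From Stdlib Require Import Reals.
Set Implicit Arguments. Unset Strict Implicit. Unset Printing Implicit Defensive.
Local Open Scope R_scope.

Definition vec (n : nat) := 'I_n -> R.

Definition vadd {n} (u v : vec n) : vec n := fun i => u i + v i.
Definition vsub {n} (u v : vec n) : vec n := fun i => u i - v i.
Definition dot {n} (u v : vec n) : R := \big[Rplus/0]_(i < n) (u i * v i).
Definition norm {n} (u : vec n) : R := sqrt (dot u u).

Definition has_grad {n} (f : vec n -> R) (g : vec n) (p : vec n) : Prop :=
  forall eps, 0 < eps -> exists delta, 0 < delta /\
    forall h : vec n, norm h < delta ->
      Rabs (f (vadd p h) - f p - dot g h) <= eps * norm h.

Definition vcontinuous {n m} (g : vec n -> vec m) : Prop :=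
  forall p eps, 0 < eps -> exists delta, 0 < delta /\
    forall q, norm (vsub q p) < delta -> norm (vsub (g q) (g p)) < eps.

Definition C1_with {n} (f : vec n -> R) (g : vec n -> vec n) : Prop :=
  (forall p, has_grad f (g p) p) /\ vcontinuous g.

Definition in_F1L {n} (l : vec n -> R) (l' : vec n -> vec n) (L : R) : Prop :=
  (forall p, has_grad l (l' p) p) /\
  forall p1 p2, l p2 <= l p1 + dot (l' p1) (vsub p2 p1) + L / 2 * (norm (vsub p2 p1))^2.

Definition strongly_convex {n} (l : vec n -> R) (l' : vec n -> vec n) (mu : R) : Prop :=
  (forall p, has_grad l (l' p) p) /\
  forall p1 p2, l p2 >= l p1 + dot (l' p1) (vsub p2 p1) + mu / 2 * (norm (vsub p2 p1))^2.

Definition convex {n} (l : vec n -> R) : Prop :=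
  forall (p1 p2 : vec n) (t : R), 0 <= t <= 1 ->
    l (fun i => t * p1 i + (1 - t) * p2 i) <= t * l p1 + (1 - t) * l p2.

(* penalty function psi; soft i = true means i in I_s, otherwise i in I_h *)
Definition psi {np nc} (c : 'I_nc -> vec np -> R) (soft : 'I_nc -> bool)
  (eps_psi : R) (p : vec np) : R :=
  \big[Rplus/0]_(i < nc)
     (if soft i then (Rmax 0 (c i p))^2 else (Rmax 0 (c i p + eps_psi))^2).

Definition fpen {np nc} (f0 : vec np -> R) (c : 'I_nc -> vec np -> R)
  (soft : 'I_nc -> bool) (eps_psi rho : R) (p : vec np) : R :=
  f0 p + rho * psi c soft eps_psi p.

Definition Z1 (D0 L0 eps : R) : R :=
  D0 / L0 * (sqrt (1 + 2 * L0 / D0^2 * eps) - 1).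

(* Main.v *)
Require Import Defs.
From mathcomp Require Import all_boot.
From Stdlib Require Import Reals Lra Psatz.
Set Implicit Arguments.
Local Open Scope R_scope.

Lemma dot_ge0 n (u : vec n) : 0 <= dot u u.
Proof.
  unfold dot. apply (big_rec (fun x => 0 <= x)); [lra|].
  intros i x _ Hx. assert (0 <= u i * u i) by nra. lra.
Qed.

Lemma dot_lin n (u v w : vec n) a b :
  dot u (fun i => a * v i + b * w i) = a * dot u v + b * dot u w.
Proof.
  unfold dot. apply (big_rec3 (fun x y z => x = a * y + b * z)); [ring|].
  intros i y1 y2 y3 _ H. rewrite H. ring.
Qed.

Lemma dot_sym n (u v : vec n) : dot u v = dot v u.
Proof.
  unfold dot. apply eq_bigr. intros i _. ring.
Qed.

Lemma dot_ext n (u v w : vec n) : (forall i, v i = w i) -> dot u v = dot u w.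
Proof.
  intros H. unfold dot. apply eq_bigr. intros i _. rewrite H. ring.
Qed.

Lemma dot_scal n (u v : vec n) a : dot u (fun i => a * v i) = a * dot u v.
Proof.
  rewrite (dot_ext u (fun i => a * v i) (fun i => a * v i + 0 * v i)).
  - rewrite dot_lin. ring.
  - intros; ring.
Qed.

Lemma norm_sq n (u : vec n) : norm u ^ 2 = dot u u.
Proof.
  unfold norm. simpl. rewrite Rmult_1_r. apply sqrt_sqrt. apply dot_ge0.
Qed.

Lemma norm_ge0 n (u : vec n) : 0 <= norm u.
Proof. apply sqrt_pos. Qed.

Lemma cs n (u v : vec n) : Rabs (dot u v) <= norm u * norm v.
Proof.
  set A := dot u u. set B := dot v v. set C := dot u v.
  assert (Q : forall s e, 0 <= s*s*A + 2*e*s*C + e*e*B).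
  { intros s e.
    pose proof (dot_ge0 (fun i => s * u i + e * v i)) as H.
    rewrite dot_lin in H.
    rewrite (dot_sym _ u) (dot_sym _ v) !dot_lin in H.
    rewrite (dot_sym v u) in H. fold A B C in H. nra. }
  assert (HA : 0 <= A) by apply dot_ge0.
  assert (HB : 0 <= B) by apply dot_ge0.
  assert (HC : C * C <= A * B).
  { destruct (Rle_lt_or_eq_dec 0 A HA) as [Ap|A0].
    - pose proof (Q (- C / A) 1) as H.
      assert (H2 : - C / A * (- C / A) * A + 2 * 1 * (- C / A) * C + 1 * 1 * B = B - C*C/A) by (field; apply Rgt_not_eq; lra).
      rewrite H2 in H.
      assert (C*C/A <= B) by lra.
      apply (Rmult_le_compat_l A) in H0; [|lra].
      replace (A * (C*C/A)) with (C*C) in H0 by (field; apply Rgt_not_eq; lra). lra.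
    - rewrite <- A0. destruct (Req_dec C 0) as [C0|Cn]; [rewrite C0; lra|].
      pose proof (Q (- (B+1)/(2*C)) 1) as H. rewrite <- A0 in H.
      assert (Hs : (- (B+1)/(2*C)) * C = -(B+1)/2) by (field; exact Cn).
      nra. }
  unfold norm. rewrite <- sqrt_mult by assumption. fold A B.
  rewrite <- (sqrt_Rsqr_abs C). apply sqrt_le_1_alt. unfold Rsqr. lra.
Qed.
Theorem corollary2
  (np nc : nat) (Hnp : (1 <= np)%nat) (Hnc : (1 <= nc)%nat)
  (f0 : vec np -> R) (f0' : vec np -> vec np)
  (c : 'I_nc -> vec np -> R) (c' : 'I_nc -> vec np -> vec np)
  (soft : 'I_nc -> bool) (eps_psi rho L0 Lpsi mu0 beta D0 eps1 eps2 : R)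
  (pa pstar : vec np)
  (* data *)
  (Hf0C1 : C1_with f0 f0')
  (HcC1 : forall i, C1_with (c i) (c' i))
  (Heps_psi : 0 < eps_psi)
  (Hopt : exists popt : vec np, (forall i, c i popt <= 0) /\
            forall p : vec np, (forall i, c i p <= 0) -> f0 popt <= f0 p)
  (* (A1) *)
  (HA1 : forall p, 0 <= f0 p)
  (* (A2) *)
  (HL0 : 0 <= L0) (HLpsi : 0 <= Lpsi)
  (HA2f0 : in_F1L f0 f0' L0)
  (HA2psi : exists psi' : vec np -> vec np, in_F1L (psi c soft eps_psi) psi' Lpsi)
  (* (A3) *)
  (Hmu0 : 0 < mu0)
  (HA3f0 : strongly_convex f0 f0' mu0)
  (HA3psi : convex (psi c soft eps_psi))
  (* (A4) *)
  (HAne : exists z : vec np, psi c soft eps_psi z = 0)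
  (Hbeta : 0 < beta)
  (HA4 : forall p : vec np, exists z : vec np, psi c soft eps_psi z = 0 /\
           (forall z' : vec np, psi c soft eps_psi z' = 0 ->
              norm (vsub z p) <= norm (vsub z' p)) /\
           psi c soft eps_psi p >= beta * (norm (vsub z p))^2)
  (* rho, p*, p_a, D0 *)
  (Hrho : 0 < rho)
  (Hpstar : forall p, fpen f0 c soft eps_psi rho pstar <= fpen f0 c soft eps_psi rho p)
  (Hpa : psi c soft eps_psi pa = 0)
  (HD0 : is_lub (fun r => exists p, f0 p <= f0 pa /\ r = norm (f0' p)) D0)
  (HD0pos : 0 < D0) (HL0pos : 0 < L0)
  (* the corollary *)
  (Heps1 : 0 <= eps1) (Heps2 : 0 <= eps2)
  (Hcond : sqrt (2 * eps1 / mu0) <= Z1 D0 L0 eps2) :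
  forall p : vec np,
    Rabs (fpen f0 c soft eps_psi rho p - fpen f0 c soft eps_psi rho pstar) <= eps1 ->
    Rabs (f0 p - f0 pstar) <= eps2.
Proof.
  intros p Hp.
  set P := psi c soft eps_psi.
  set F := fpen f0 c soft eps_psi rho.
  assert (HP0 : forall x, 0 <= P x).
  { intros x. unfold P, psi. apply (big_rec (fun y => 0 <= y)); [lra|].
    intros i y _ Hy. destruct (soft i); [pose proof (pow2_ge_0 (Rmax 0 (c i x)))|
      pose proof (pow2_ge_0 (Rmax 0 (c i x + eps_psi)))]; lra. }
  assert (HF : forall x, F x = f0 x + rho * P x) by reflexivity.
  assert (Hmin := Hpstar). fold F in Hmin.
  assert (Hstar_pa : f0 pstar <= f0 pa).
  { pose proof (Hmin pa) as H. rewrite !HF in H. fold P in Hpa. rewrite Hpa in H.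
    pose proof (HP0 pstar). nra. }
  set g := f0' pstar.
  assert (Hg : norm g <= D0).
  { destruct HD0 as [Hub _]. apply Hub. exists pstar. split; [exact Hstar_pa|reflexivity]. }
  set d := vsub p pstar.
  set N := dot d d.
  set a := F p - F pstar.
  assert (Ha0 : 0 <= a) by (unfold a; pose proof (Hmin p); lra).
  assert (Ha1 : a <= eps1) by (unfold a; fold F in Hp; pose proof (Rle_abs (F p - F pstar)); lra).
  destruct HA3f0 as [_ HSC].
  assert (Kt : forall t, 0 < t <= 1 -> mu0 / 2 * (1 - t) * N <= a).
  { intros t Ht.
    set q := fun i => t * p i + (1 - t) * pstar i.
    pose proof (HSC q p) as H1. pose proof (HSC q pstar) as H2.
    pose proof (HA3psi p pstar t (conj (Rlt_le _ _ (proj1 Ht)) (proj2 Ht))) as H3.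
    fold P in H3. fold q in H3.
    pose proof (Hmin q) as H4. rewrite !HF in H4.
    set X := dot (f0' q) d.
    assert (E1 : dot (f0' q) (vsub p q) = (1 - t) * X).
    { unfold X. rewrite <- dot_scal. apply dot_ext. intros i. unfold d, q, vsub. ring. }
    assert (E2 : dot (f0' q) (vsub pstar q) = - t * X).
    { unfold X. rewrite <- dot_scal. apply dot_ext. intros i. unfold d, q, vsub. ring. }
    assert (E3 : norm (vsub p q) ^ 2 = (1 - t) ^ 2 * N).
    { rewrite norm_sq. unfold N. rewrite (dot_ext (vsub p q) (vsub p q) (fun i => (1 - t) * d i)).
      2:{ intros i. unfold d, q, vsub. ring. }
      rewrite dot_scal dot_sym.
      rewrite (dot_ext d (vsub p q) (fun i => (1 - t) * d i)).
      2:{ intros i. unfold d, q, vsub. ring. }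
      rewrite dot_scal. ring. }
    assert (E4 : norm (vsub pstar q) ^ 2 = t ^ 2 * N).
    { rewrite norm_sq. unfold N. rewrite (dot_ext (vsub pstar q) (vsub pstar q) (fun i => (- t) * d i)).
      2:{ intros i. unfold d, q, vsub. ring. }
      rewrite dot_scal dot_sym.
      rewrite (dot_ext d (vsub pstar q) (fun i => (- t) * d i)).
      2:{ intros i. unfold d, q, vsub. ring. }
      rewrite dot_scal. ring. }
    rewrite E1 E3 in H1. rewrite E2 E4 in H2.
    assert (Hsum : t * (a - mu0 / 2 * (1 - t) * N) >= 0).
    { unfold a. rewrite !HF.
      assert (T1 : t * f0 p >= t * (f0 q + (1 - t) * X + mu0 / 2 * ((1 - t) ^ 2 * N))) by
        (apply Rle_ge, Rmult_le_compat_l; lra).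
      assert (T2 : (1 - t) * f0 pstar >= (1 - t) * (f0 q + - t * X + mu0 / 2 * (t ^ 2 * N))) by
        (apply Rle_ge, Rmult_le_compat_l; lra).
      assert (T3 : rho * P q <= rho * (t * P p + (1 - t) * P pstar)) by
        (apply Rmult_le_compat_l; lra).
      nra. }
    assert (0 <= a - mu0 / 2 * (1 - t) * N).
    { destruct (Rle_lt_dec 0 (a - mu0 / 2 * (1 - t) * N)) as [h|h]; [exact h|].
      exfalso. assert (t * (a - mu0 / 2 * (1 - t) * N) < 0) by nra. lra. }
    lra. }
  assert (HN0 : 0 <= N) by apply dot_ge0.
  assert (HK : mu0 / 2 * N <= a).
  { destruct (Rle_lt_dec (mu0 / 2 * N) a) as [h|h]; [exact h|exfalso].
    set t := (mu0 / 2 * N - a) / (mu0 * N).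
    assert (HNp : 0 < N) by nra.
    assert (Ht0 : 0 < t) by (unfold t; apply Rdiv_lt_0_compat; nra).
    assert (Ht1 : t <= 1 / 2).
    { unfold t. apply (Rmult_le_reg_r (mu0 * N)); [nra|].
      field_simplify; nra. }
    assert (Ht1b : t <= 1) by lra.
    pose proof (Kt t (conj Ht0 Ht1b)) as K.
    assert (Etn : t * (mu0 * N) = mu0 / 2 * N - a) by (unfold t; field; repeat split; apply Rgt_not_eq; lra).
    nra. }
  set delta := norm d.
  assert (Hdel0 : 0 <= delta) by apply norm_ge0.
  assert (Hdel2 : delta ^ 2 = N) by (apply norm_sq).
  set r := Z1 D0 L0 eps2.
  assert (Hdr : delta <= r).
  { apply (Rle_trans _ (sqrt (2 * eps1 / mu0))); [|exact Hcond].
    rewrite <- (sqrt_pow2 delta Hdel0). apply sqrt_le_1_alt.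
    apply (Rmult_le_reg_l (mu0 / 2)); [lra|].
    replace (mu0 / 2 * (2 * eps1 / mu0)) with eps1 by (field; apply Rgt_not_eq; lra). rewrite Hdel2; lra. }
  assert (Hcsg : Rabs (dot g d) <= D0 * delta).
  { apply (Rle_trans _ _ _ (cs g d)). fold delta. apply Rmult_le_compat_r; lra. }
  destruct HA2f0 as [_ HL].
  pose proof (HL pstar p) as Up. fold g d in Up. fold delta in Up.
  pose proof (HSC pstar p) as Lo. fold g d in Lo. fold delta in Lo.
  assert (HS : sqrt (1 + 2 * L0 / D0 ^ 2 * eps2) * sqrt (1 + 2 * L0 / D0 ^ 2 * eps2)
               = 1 + 2 * L0 / D0 ^ 2 * eps2).
  { apply sqrt_sqrt. assert (0 <= 2 * L0 / D0 ^ 2) by (apply Rle_mult_inv_pos; [lra| apply pow_lt; lra]). nra. }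
  assert (Heq : D0 * r + L0 / 2 * r ^ 2 = eps2).
  { unfold r, Z1.
    revert HS. generalize (sqrt (1 + 2 * L0 / D0 ^ 2 * eps2)). intros S HS.
    replace (D0 * (D0 / L0 * (S - 1)) + L0 / 2 * (D0 / L0 * (S - 1)) ^ 2)
      with (D0 ^ 2 / (2 * L0) * (S * S - 1)) by (field; lra).
    rewrite HS. field. lra. }
  assert (Hq : D0 * delta + L0 / 2 * delta ^ 2 <= D0 * r + L0 / 2 * r ^ 2).
  { assert (delta ^ 2 <= r ^ 2) by (simpl; nra). nra. }
  pose proof (Rle_abs (dot g d)). pose proof (Rle_abs (- dot g d)) as Hab. rewrite Rabs_Ropp in Hab.
  assert (0 <= mu0 / 2 * delta ^ 2) by (pose proof (pow2_ge_0 delta); nra).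
  apply Rabs_le. split; lra.
Qed.
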